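(* Let $M$ and $D$ be $n\times n$ matrices with entries in $\mathbb{Z}_2$ such that $M$ is non-degenerate and $D$ is diagonal. Then $\operatorname{rk}(M+D)\ge \operatorname{rk}(M+I)/2$, where $I$ is the $n\times n$ identity matrix.
   Context: A matrix is diagonal if all its entries outside the main diagonal are $0$. Ranks are over $\mathbb{Z}_2$. *)

(* Defs.v *)
From mathcomp Require Import all_boot all_order all_algebra all_fingroup.
Set Implicit Arguments. Unset Strict Implicit. Unset Printing Implicit Defensive.

(* Main.v *)
Require Import Defs.
From mathcomp Require Import all_boot all_order all_algebra all_fingroup.
From mathcomp Require Import zify.
Import GRing.Theory.
Local Open Scope ring_scope.

Lemma f2_idem (x : 'F_2) : x * (1 - x) = 0.
Proof. by case: x => [[|[|//]]] ? ; apply/val_inj. Qed.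

Lemma diag_ann (n : nat) (D : 'M['F_2]_n) :
  is_diag_mx D -> D *m (1%:M - D) = 0.
Proof.
move=> /is_diag_mxP Hd; apply/matrixP => i j; rewrite !mxE.
rewrite (bigD1 i) //= big1 ?addr0.
  rewrite !mxE; case: (eqVneq i j) => [->|ij].
    exact: f2_idem.
  by rewrite (Hd i j ij) /= subrr mulr0.
by move=> k ki; rewrite Hd ?mul0r // eq_sym.
Qed.

Theorem mainTheorem5 (n : nat) (M D : 'M['F_2]_n) :
  M \in unitmx -> is_diag_mx D ->
  (\rank ((M + 1%:M)%R) <= 2 * \rank ((M + D)%R))%N.
Proof.
move=> Mu Dd.
have h1 := mulmx0_rank_max (@diag_ann _ D Dd).
have h2 : (\rank (M + 1%:M)%R <= \rank (M + D)%R + \rank (1%:M - D)%R)%N.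
  have -> : M + 1%:M = (M + D) + (1%:M - D) by rewrite addrA addrAC addrK.
  exact: mxrank_add.
have h3 : (\rank M <= \rank (M + D)%R + \rank D)%N.
  have := mxrank_add (M + D) (- D).
  by rewrite addrK mxrank_opp.
rewrite mxrank_unit // in h3.
rewrite mul2n -addnn; lia.
Qed.
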